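(* Let $(\vdash,\overline{\cdot},\widehat{\cdot})$ be a setting satisfying Pre-Relevance, and let $\mathcal{S},\mathcal{S}'\subseteq\mathcal{L}$ with $\mathcal{S}\mid\mathcal{S}'$. If $\mathcal{E}$ is a complete extension of $\mathcal{AF}_{\vdash}(\mathcal{S})$ and $\mathcal{E}'$ is a complete extension of $\mathcal{AF}_{\vdash}(\mathcal{S}')$, then $\mathcal{E}\cup\mathcal{E}'$ is an admissible set of $\mathcal{AF}_{\vdash}(\mathcal{S}\cup\mathcal{S}')$.
   Context: $\mathcal{L}$ is the set of formulas of a language built from propositional atoms; $\mathsf{Atoms}(\mathcal{S})$ is the set of atoms occurring in $\mathcal{S}$, and $\mathcal{S}_1\mid\mathcal{S}_2$ means $\mathsf{Atoms}(\mathcal{S}_1)\cap\mathsf{Atoms}(\mathcal{S}_2)=\emptyset$. A setting is $(\vdash,\overline{\cdot},\widehat{\cdot})$ with ${\vdash}\subseteq\wp_{\sf fin}(\mathcal{L})\times\mathcal{L}$ arbitrary, $\overline{\cdot}:\mathcal{L}\to\wp(\mathcal{L})$, $\widehat{\cdot}$ assigning to each nonempty finite set a finite set of formulas, with $\widehat{\emptyset}=\emptyset$. $\mathit{Arg}_{\vdash}(\mathcal{S})=\{(\Gamma,\gamma):\Gamma\subseteq\mathcal{S}\text{ finite},\Gamma\vdash\gamma\}$; $\mathcal{AF}_{\vdash}(\mathcal{S})$ is the attack graph on it where $(\Gamma,\gamma)$ attacks $(\Gamma',\gamma')$ iff $\gamma\in\overline{\phi}$ for some $\phi\in\widehat{\Gamma'}$.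 Admissible = conflict-free and every attacker (in the framework) of a member is attacked by a member; complete = admissible and contains every argument it defends. Pre-Relevance of the setting: (a) for all $\mathcal{S}_1,\mathcal{S}_2,\phi$ with $\mathcal{S}_1\cup\{\phi\}\mid\mathcal{S}_2$, $\mathcal{S}_1\cup\mathcal{S}_2\vdash\phi$ implies $\mathcal{S}_1'\vdash\phi$ for some $\mathcal{S}_1'\subseteq\mathcal{S}_1$; (b) primeness: for all sets of atoms $\mathcal{A}_1\mid\mathcal{A}_2$, all finite $\mathcal{S}_1,\mathcal{T}_1,\mathcal{S}_2,\mathcal{T}_2$ with $\mathsf{Atoms}(\mathcal{S}_i),\mathsf{Atoms}(\mathcal{T}_i)\subseteq\mathcal{A}_i$, and all $\phi,\psi$ with $\psi\in\overline{\phi}$, $\phi\in\widehat{\mathcal{T}_1\cup\mathcal{T}_2}$: if $\mathcal{S}_1\cup\mathcal{S}_2\vdash\psi$ then there are $i\in\{1,2\}$, $\mathcal{S}_i'\subseteq\mathcal{S}_i$, $\phi_i\in\widehat{\mathcal{T}_i}$, $\psi_i\in\overline{\phi_i}$ with $\mathcal{S}_i'\vdash\psi_i$; (c) $\widehat{\Delta}\subseteq\widehat{\Delta\cup\Delta'}$ for all finite $\Delta,\Delta'$. *)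

(* Defs.v *)
(* Abstract formula language: a type Form of formulas over a
   type Atom of propositional atoms, with atm phi a meaning "atom a occurs in phi". *)
From Stdlib Require Import List.

Definition finite {X : Type} (A : X -> Prop) : Prop :=
  exists l : list X, forall x, A x <-> In x l.

Definition subset {X : Type} (A B : X -> Prop) : Prop := forall x, A x -> B x.
Definition union {X : Type} (A B : X -> Prop) : X -> Prop := fun x => A x \/ B x.
Definition emptyset {X : Type} : X -> Prop := fun _ => False.
Definition single {X : Type} (a : X) : X -> Prop := fun x => x = a.

Definition Atoms {Form Atom : Type} (atm : Form -> Atom -> Prop)
  (S : Form -> Prop) : Atom -> Prop := fun a => exists x, S x /\ atm x a.

Definition atom_disjoint {Form Atom : Type} (atm : Form -> Atom -> Prop)
  (S1 S2 : Form -> Prop) : Prop :=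
  forall a, Atoms atm S1 a -> Atoms atm S2 a -> False.

(* A setting (|-, bar, hat): |- is an arbitrary relation between finite sets and
   formulas (only its values on finite sets matter); hat sends finite sets to
   finite sets and hat(emptyset) = emptyset. *)
Definition is_setting {Form : Type} (hat : (Form -> Prop) -> (Form -> Prop)) : Prop :=
  (forall D, finite D -> finite (hat D)) /\ (forall phi, ~ hat emptyset phi).

Definition pre_relevance {Form Atom : Type} (atm : Form -> Atom -> Prop)
  (derives : (Form -> Prop) -> Form -> Prop)
  (bar : Form -> (Form -> Prop))
  (hat : (Form -> Prop) -> (Form -> Prop)) : Prop :=
  (forall (S1 S2 : Form -> Prop) (phi : Form),
      finite S1 -> finite S2 ->
      atom_disjoint atm (union S1 (single phi)) S2 ->
      derives (union S1 S2) phi ->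
      exists S1', subset S1' S1 /\ derives S1' phi)
  /\
  (forall (A1 A2 : Atom -> Prop) (S1 T1 S2 T2 : Form -> Prop) (phi psi : Form),
      (forall a, A1 a -> A2 a -> False) ->
      finite S1 -> finite T1 -> finite S2 -> finite T2 ->
      subset (Atoms atm S1) A1 -> subset (Atoms atm T1) A1 ->
      subset (Atoms atm S2) A2 -> subset (Atoms atm T2) A2 ->
      bar phi psi -> hat (union T1 T2) phi ->
      derives (union S1 S2) psi ->
      (exists S1' phi1 psi1, subset S1' S1 /\ hat T1 phi1 /\ bar phi1 psi1
                             /\ derives S1' psi1)
      \/
      (exists S2' phi2 psi2, subset S2' S2 /\ hat T2 phi2 /\ bar phi2 psi2
                             /\ derives S2' psi2))
  /\
  (forall D D' : Form -> Prop, finite D -> finite D' ->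
      subset (hat D) (hat (union D D'))).

Definition argument (Form : Type) : Type := ((Form -> Prop) * Form)%type.

Definition in_Arg {Form : Type} (derives : (Form -> Prop) -> Form -> Prop)
  (S : Form -> Prop) (a : argument Form) : Prop :=
  finite (fst a) /\ subset (fst a) S /\ derives (fst a) (snd a).

Definition attacks {Form : Type} (bar : Form -> (Form -> Prop))
  (hat : (Form -> Prop) -> (Form -> Prop)) (a b : argument Form) : Prop :=
  exists phi, hat (fst b) phi /\ bar phi (snd a).

Definition defends {Form : Type} (derives : (Form -> Prop) -> Form -> Prop)
  (bar : Form -> (Form -> Prop)) (hat : (Form -> Prop) -> (Form -> Prop))
  (S : Form -> Prop) (E : argument Form -> Prop) (a : argument Form) : Prop :=
  forall b, in_Arg derives S b -> attacks bar hat b a ->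
    exists c, E c /\ attacks bar hat c b.

Definition conflict_free {Form : Type} (bar : Form -> (Form -> Prop))
  (hat : (Form -> Prop) -> (Form -> Prop)) (E : argument Form -> Prop) : Prop :=
  forall a b, E a -> E b -> ~ attacks bar hat a b.

Definition admissible {Form : Type} (derives : (Form -> Prop) -> Form -> Prop)
  (bar : Form -> (Form -> Prop)) (hat : (Form -> Prop) -> (Form -> Prop))
  (S : Form -> Prop) (E : argument Form -> Prop) : Prop :=
  subset E (in_Arg derives S) /\ conflict_free bar hat E /\
  (forall a, E a -> defends derives bar hat S E a).

Definition complete {Form : Type} (derives : (Form -> Prop) -> Form -> Prop)
  (bar : Form -> (Form -> Prop)) (hat : (Form -> Prop) -> (Form -> Prop))
  (S : Form -> Prop) (E : argument Form -> Prop) : Prop :=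
  admissible derives bar hat S E /\
  (forall a, in_Arg derives S a -> defends derives bar hat S E a -> E a).

(* Main.v *)
Require Import Defs.
From Stdlib Require Import List Classical FunctionalExtensionality PropExtensionality.

Lemma pred_ext {X : Type} (A B : X -> Prop) : (forall x, A x <-> B x) -> A = B.
Proof.
  intro H; apply functional_extensionality; intro x; apply propositional_extensionality; auto.
Qed.

Lemma finite_sub {X : Type} (A B : X -> Prop) : finite A -> subset B A -> finite B.
Proof.
  intros [l Hl] HBA.
  assert (G : exists l', forall x, (B x /\ In x l) <-> In x l').
  { clear Hl. induction l as [|a l IH].
    - exists nil; simpl; tauto.
    - destruct IH as [l' Hl'].
      destruct (classic (B a)) as [Ba|nBa].
      + exists (a :: l'); intro x; simpl; specialize (Hl' x).
        split.
        * intros [Bx [->|Ix]]; auto. right; apply Hl'; auto.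
        * intros [<-|Ix]; auto. apply Hl' in Ix; tauto.
      + exists l'; intro x; simpl; specialize (Hl' x).
        split.
        * intros [Bx [<-|Ix]]. contradiction. apply Hl'; auto.
        * intro Ix; apply Hl' in Ix; tauto. }
  destruct G as [l' Hl']; exists l'; intro x; rewrite <- Hl'.
  split; [intro Bx; split; [auto| apply Hl; auto] | tauto].
Qed.

Lemma finite_empty {X : Type} : finite (@emptyset X).
Proof. exists nil; simpl; unfold emptyset; tauto. Qed.

Lemma union_empty_l {X : Type} (A : X -> Prop) : union emptyset A = A.
Proof. apply pred_ext; unfold union, emptyset; tauto. Qed.

Lemma union_empty_r {X : Type} (A : X -> Prop) : union A emptyset = A.
Proof. apply pred_ext; unfold union, emptyset; tauto. Qed.

Lemma atoms_sub {Form Atom : Type} (atm : Form -> Atom -> Prop) (A B : Form -> Prop) :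
  subset A B -> subset (Atoms atm A) (Atoms atm B).
Proof. intros H a [x [Ax Hx]]; exists x; auto. Qed.

Lemma atoms_empty {Form Atom : Type} (atm : Form -> Atom -> Prop) (C : Atom -> Prop) :
  subset (Atoms atm emptyset) C.
Proof. intros a [x [[] _]]. Qed.

Lemma cross {Form Atom : Type} (atm : Form -> Atom -> Prop)
  (derives : (Form -> Prop) -> Form -> Prop)
  (bar : Form -> (Form -> Prop))
  (hat : (Form -> Prop) -> (Form -> Prop))
  (Hset : is_setting hat)
  (Hrel : pre_relevance atm derives bar hat)
  (S S' : Form -> Prop)
  (Hdisj : atom_disjoint atm S S')
  (E' : argument Form -> Prop)
  (HE' : admissible derives bar hat S' E') a b :
  in_Arg derives S a -> E' b -> attacks bar hat a b -> False.
Proof.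
  destruct Hset as [Hfin Hemp].
  destruct Hrel as [_ [Hb _]].
  destruct HE' as [Hsub [Hcf Hdef]].
  destruct a as [G g], b as [G' g'].
  intros [Gf [GS Gd]] Eb [phi [Hphi Hbar]]; simpl in *.
  destruct (Hsub _ Eb) as [G'f [G'S G'd]]; simpl in *.
  assert (H := Hb (Atoms atm S) (Atoms atm S') G emptyset emptyset G' phi g
    Hdisj Gf finite_empty finite_empty G'f (atoms_sub atm _ _ GS)
    (atoms_empty atm _) (atoms_empty atm _) (atoms_sub atm _ _ G'S) Hbar).
  rewrite union_empty_l, union_empty_r in H.
  destruct (H Hphi Gd) as [[S1 [p1 [q1 [_ [Hp1 _]]]]] | [S2 [p2 [q2 [HS2 [Hp2 [Hq2 Hd2]]]]]]].
  - exact (Hemp _ Hp1).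
  - assert (Arg2 : in_Arg derives S' (S2, q2)).
    { split; [|split]; simpl.
      - apply (finite_sub emptyset); [apply finite_empty| exact HS2].
      - intros x Hx; destruct (HS2 x Hx).
      - exact Hd2. }
    destruct (Hdef _ Eb _ Arg2) as [c [Ec [p3 [Hp3 _]]]].
    + exists p2; simpl; auto.
    + simpl in Hp3.
      assert (S2 = emptyset) as -> by (apply pred_ext; intro x; split; [apply HS2| intros []]).
      exact (Hemp _ Hp3).
Qed.

Lemma defense {Form Atom : Type} (atm : Form -> Atom -> Prop)
  (derives : (Form -> Prop) -> Form -> Prop)
  (bar : Form -> (Form -> Prop))
  (hat : (Form -> Prop) -> (Form -> Prop))
  (Hset : is_setting hat)
  (Hrel : pre_relevance atm derives bar hat)
  (S S' : Form -> Prop)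
  (Hdisj : atom_disjoint atm S S')
  (E : argument Form -> Prop)
  (HE : admissible derives bar hat S E) a :
  E a -> defends derives bar hat (union S S') E a.
Proof.
  destruct Hset as [Hfin Hemp].
  destruct Hrel as [_ [Hb Hc]].
  destruct HE as [Hsub [Hcf Hdef]].
  intros Ea [D d] [Df [DS Dd]] [phi [Hphi Hbar]]; simpl in *.
  destruct a as [G g].
  destruct (Hsub _ Ea) as [Gf [GS Gd]]; simpl in *.
  set (D1 := fun x => D x /\ S x).
  set (D2 := fun x => D x /\ S' x).
  assert (D1f : finite D1) by (apply (finite_sub D); auto; intros x [? ?]; auto).
  assert (D2f : finite D2) by (apply (finite_sub D); auto; intros x [? ?]; auto).
  assert (HD : union D1 D2 = D).
  { apply pred_ext; intro x; unfold union, D1, D2; split; [tauto|].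
    intro Dx; destruct (DS x Dx); tauto. }
  assert (H := Hb (Atoms atm S) (Atoms atm S') D1 G D2 emptyset phi d
    Hdisj D1f Gf D2f finite_empty
    (atoms_sub atm _ _ (fun x (h : D1 x) => proj2 h)) (atoms_sub atm _ _ GS)
    (atoms_sub atm _ _ (fun x (h : D2 x) => proj2 h)) (atoms_empty atm _) Hbar).
  rewrite union_empty_r, HD in H.
  destruct (H Hphi Dd) as [[S1 [p1 [q1 [HS1 [Hp1 [Hq1 Hd1]]]]]] | [S2 [p2 [q2 [_ [Hp2 _]]]]]].
  - assert (Arg1 : in_Arg derives S (S1, q1)).
    { split; [|split]; simpl.
      - apply (finite_sub D1); auto.
      - intros x Hx; apply (HS1 x Hx).
      - exact Hd1. }
    destruct (Hdef _ Ea _ Arg1) as [c [Ec [p3 [Hp3 Hb3]]]].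
    + exists p1; simpl; auto.
    + exists c; split; auto. exists p3; split; auto; simpl in *.
      assert (HSD : union S1 D = D).
      { apply pred_ext; intro x; unfold union; split; [|tauto].
        intros [h|h]; auto. apply (HS1 x h). }
      rewrite <- HSD. apply Hc; auto. apply (finite_sub D1); auto.
  - exfalso; exact (Hemp _ Hp2).
Qed.

Theorem lemma3 (Form Atom : Type) (atm : Form -> Atom -> Prop)
  (derives : (Form -> Prop) -> Form -> Prop)
  (bar : Form -> (Form -> Prop))
  (hat : (Form -> Prop) -> (Form -> Prop))
  (Hset : is_setting hat)
  (Hrel : pre_relevance atm derives bar hat)
  (S S' : Form -> Prop)
  (Hdisj : atom_disjoint atm S S')
  (E E' : argument Form -> Prop)
  (HE : complete derives bar hat S E)
  (HE' : complete derives bar hat S' E') :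
  admissible derives bar hat (union S S') (union E E').
Proof.
  destruct HE as [HE _], HE' as [HE' _].
  assert (Hdisj' : atom_disjoint atm S' S) by (intros a h1 h2; exact (Hdisj a h2 h1)).
  pose proof HE as [Hsub [Hcf _]].
  pose proof HE' as [Hsub' [Hcf' _]].
  split; [|split].
  - intros a [Ea|Ea].
    + destruct (Hsub _ Ea) as [f [s d]]; split; [|split]; auto.
      intros x hx; left; auto.
    + destruct (Hsub' _ Ea) as [f [s d]]; split; [|split]; auto.
      intros x hx; right; auto.
  - intros a b [Ea|Ea] [Eb|Eb].
    + apply Hcf; auto.
    + intro Hat; exact (cross atm derives bar hat Hset Hrel S S' Hdisj E' HE' a b (Hsub _ Ea) Eb Hat).
    + intro Hat; exact (cross atm derives bar hat Hset Hrel S' S Hdisj' E HE a b (Hsub' _ Ea) Eb Hat).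
    + apply Hcf'; auto.
  - intros a [Ea|Ea] b Hb Hat.
    + destruct (defense atm derives bar hat Hset Hrel S S' Hdisj E HE a Ea b Hb Hat)
        as [c [Ec Hc]].
      exists c; split; [left|]; auto.
    + assert (Hb' : in_Arg derives (union S' S) b).
      { destruct Hb as [f [s d]]; split; [|split]; auto.
        intros x hx; destruct (s x hx); [right|left]; auto. }
      destruct (defense atm derives bar hat Hset Hrel S' S Hdisj' E' HE' a Ea b Hb' Hat)
        as [c [Ec Hc]].
      exists c; split; [right|]; auto.
Qed.
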